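(* Let $M$ be a layered Markov Transition Model, $\pi_e$ a deterministic evaluation policy, $\Phi$ any aggregation scheme, and $\mu=(\mu_h)_{h\in[H]}$ offline distributions with $\mu_h\in\Delta(\mathcal{X}_h\times\mathcal{A})$. Suppose $M$ has pushforward concentrability coefficient $\mathsf{C}_{\mathrm{pf}}=\mathsf{C}_{\mathcal{X}}\mathsf{C}_{\mathcal{A}}$ with respect to $\mu$. Then for every $\epsilon>0$ (for which the maximum defining $\bar{\mathsf{C}}_\epsilon$ is over a nonempty set), $\bar{\mathsf{C}}_\epsilon(M,\Phi,\mu)\le\mathsf{C}_{\mathrm{pf}}$.
   Context: Markov Transition Model $M=(\mathcal{X},\mathcal{A},T,H,\rho)$ with finite layered state space $\mathcal{X}_1\cup\dots\cup\mathcal{X}_H$, finite actions, $T(\cdot|x,a)$ supported on $\mathcal{X}_{h+1}$ for $x\in\mathcal{X}_h$, $\rho\in\Delta(\mathcal{X}_1)$. For $x\in\mathcal{X}_h$ write $\mu(x)=\sum_a\mu_h(x,a)$ and $\mu(a|x)=\mu_h(x,a)/\mu(x)$. Pushforward concentrability: there are $\mathsf{C}_{\mathcal{A}},\mathsf{C}_{\mathcal{X}}>0$ with (a) $\mu(a|x)\ge 1/\mathsf{C}_{\mathcal{A}}$ for all $x,a$; (b) $T(x'|x,a)/\mu(x')<\mathsf{C}_{\mathcal{X}}$ and $\rho(x)/\mu(x)<\mathsf{C}_{\mathcal{X}}$ for all $x,x',a$; then $\mathsf{C}_{\mathrm{pf}}=\mathsf{C}_{\mathcal{X}}\mathsf{C}_{\mathcal{A}}$.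 Aggregation scheme: $\Phi=\Phi_1\cup\dots\cup\Phi_H$, $\Phi_h$ a partition of $\mathcal{X}_h$. Aggregated transitions, for $\phi\in\Phi_h,\phi'\in\Phi_{h+1}$: $\bar T(\phi'|\phi,\pi)=\frac{\sum_{x\in\phi}\sum_{x'\in\phi'}\sum_a\pi(a|x)\mu_h(x,a)T(x'|x,a)}{\sum_{x\in\phi}\sum_a\pi(a|x)\mu_h(x,a)}$. Aggregated occupancy $\bar d_h^\pi(\phi)$: law of $\phi_h$ under $\phi_1\sim\bar\rho$, $\phi_{i+1}\sim\bar T(\cdot|\phi_i,\pi)$, with $\bar\rho(\phi)=\sum_{x\in\phi}\rho(x)$. Aggregated concentrability: $\bar{\mathsf{C}}_\epsilon(M,\Phi,\mu)=\max_h\max\{\frac{\sum_{\phi\in\mathcal{I}}\bar d_h^{\pi_e}(\phi)}{\sum_{\phi\in\mathcal{I}}\sum_{x\in\phi}\mu_h(x,\pi_e(x))}:\mathcal{I}\subseteq\Phi_h,\ \sum_{\phi\in\mathcal{I}}\bar d_h^{\pi_e}(\phi)\ge\epsilon\}$. *)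

(* Defs.v *)
(* Layers are indexed 0..H-1 (paper: 1..H). *)
From mathcomp Require Import all_boot all_order all_algebra.
Set Implicit Arguments. Unset Strict Implicit. Unset Printing Implicit Defensive.
Import Order.TTheory GRing.Theory Num.Theory.
Local Open Scope ring_scope.

Section MTM.
Variables (R : realFieldType) (X : nat -> finType) (A : finType).
Variable T : forall h, X h -> A -> X h.+1 -> R.
Variable rho : X 0%N -> R.
Variable mu : forall h, X h -> A -> R.
Variable pie : forall h, X h -> A.
Variable P : forall h, {set {set X h}}.

Definition mu_state h (x : X h) : R := \sum_(a : A) mu x a.

Definition pie_prob h (x : X h) (a : A) : R := (a == pie x)%:R.

Definition Tbar h (phi : {set X h}) (phi' : {set X h.+1}) : R :=
  (\sum_(x in phi) \sum_(x' in phi') \sum_(a : A) pie_prob x a * mu x a * T x a x')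
  / (\sum_(x in phi) \sum_(a : A) pie_prob x a * mu x a).

Fixpoint dbar (h : nat) : {set X h} -> R :=
  match h return {set X h} -> R with
  | 0 => fun phi => \sum_(x in phi) rho x
  | h'.+1 => fun phi' => \sum_(phi in P h') dbar phi * Tbar phi phi'
  end.

Definition agg_ratio h (I : {set {set X h}}) : R :=
  (\sum_(phi in I) dbar phi) / (\sum_(phi in I) \sum_(x in phi) mu x (pie x)).

Definition agg_admissible (eps : R) h (I : {set {set X h}}) : bool :=
  (I \subset P h) && (eps <= \sum_(phi in I) dbar phi).

(* max over admissible I at layer h (0 if none; all ratios are >= 0) *)
Definition Cbar_layer (eps : R) h : R :=
  \big[Num.max/0]_(I : {set {set X h}} | agg_admissible eps I) agg_ratio I.

Definition Cbar (H : nat) (eps : R) : R :=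
  \big[Num.max/0]_(h < H) Cbar_layer eps h.

Definition valid_setup (H : nat) : Prop :=
  [/\ (forall x, 0 <= rho x) /\ \sum_x rho x = 1,
      (forall h, (h.+1 < H)%N -> forall x a,
          (forall x', 0 <= T x a x') /\ \sum_(x' : X h.+1) T x a x' = 1),
      (forall h, (h < H)%N -> (forall (x : X h) a, 0 <= mu x a) /\
          \sum_(x : X h) \sum_(a : A) mu x a = 1)
    & (forall h, (h < H)%N -> partition (P h) [set: X h])].

Definition pushforward_conc (H : nat) (CX CA : R) : Prop :=
  [/\ 0 < CA, 0 < CX,
      (forall h, (h < H)%N -> forall (x : X h) a, 1 / CA <= mu x a / mu_state x),
      (forall h, (h.+1 < H)%N -> forall (x : X h) a (x' : X h.+1),
          T x a x' / mu_state x' < CX)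
    & (forall x : X 0%N, rho x / mu_state x < CX)].

End MTM.

(* Main.v *)
Require Import Defs.
From mathcomp Require Import all_boot all_order all_algebra.
From mathcomp Require Import lra.
Import Order.TTheory GRing.Theory Num.Theory.
Local Open Scope ring_scope.

Section Proof8.
Variables (R : realFieldType) (X : nat -> finType) (A : finType) (H : nat)
  (T : forall {h}, X h -> A -> X h.+1 -> R) (rho : X 0%N -> R)
  (mu : forall {h}, X h -> A -> R) (pie : forall {h}, X h -> A)
  (P : forall h, {set {set X h}}) (CX CA : R).

Local Notation ms := (mu_state (@mu)).
Local Notation pp := (pie_prob R (@pie)).
Local Notation db := (dbar (@T) rho (@mu) (@pie) P).
Local Notation Tb := (Tbar (@T) (@mu) (@pie)).

Lemma sum_pie h (x : X h) :
  \sum_(a : A) pp x a * mu x a = mu x (pie x).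
Proof.
rewrite (bigD1 (pie x)) //= big1 ?addr0.
  by rewrite /pie_prob eqxx mul1r.
by move=> a /negbTE ha; rewrite /pie_prob ha mul0r.
Qed.

Lemma sum_cover h (Q : {set {set X h}}) (F : X h -> R) :
  partition Q [set: X h] -> \sum_(phi in Q) \sum_(x in phi) F x = \sum_x F x.
Proof.
case/and3P=> /eqP cov triv _.
by rewrite -(big_trivIset _ triv) cov; apply: eq_bigl => x; rewrite inE.
Qed.

Lemma divle (N D K : R) : 0 <= K -> 0 <= D -> N <= D * K -> N / D <= K.
Proof.
move=> K0 D0 NK; have [->|Dn0] := eqVneq D 0.
  by rewrite invr0 mulr0.
by rewrite ler_pdivrMr ?lt_def ?Dn0 // mulrC.
Qed.


Lemma ms_pos : valid_setup (@T) rho (@mu) P H -> pushforward_conc (@T) rho (@mu) H CX CA ->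
  forall h, (h < H)%N -> forall x : X h, 0 < ms x /\ forall a, ms x / CA <= mu x a.
Proof.
case=> _ _ hmu _; case=> CA0 CX0 hr _ _ h hH x.
have m0 : 0 <= ms x by apply: sumr_ge0 => a _; apply: (hmu h hH).1.
have mp : 0 < ms x.
  rewrite lt_def m0 andbT; apply/negP => /eqP e.
  have := hr h hH x (pie x); rewrite e invr0 mulr0.
  have : 0 < 1 / CA by rewrite divr_gt0.
  lra.
split=> // a; have := hr h hH x a.
by rewrite ler_pdivlMr // mul1r mulrC.
Qed.

Lemma key : valid_setup (@T) rho (@mu) P H -> pushforward_conc (@T) rho (@mu) H CX CA ->
  forall h, (h < H)%N ->
  (forall phi, phi \in P h -> 0 <= db phi /\ db phi <= CX * \sum_(x in phi) ms x) /\
  \sum_(phi in P h) db phi = 1.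
Proof.
move=> V C; have MP := ms_pos V C.
move: V C => [[hr0 hr1] hT hmu hP] [CA0 CX0 hmr hTr hrr].
elim=> [|h IH] hH.
  split; last by rewrite /= sum_cover ?hP.
  move=> phi _ /=; split; first by apply: sumr_ge0 => x _; exact: hr0.
  rewrite mulr_sumr; apply: ler_sum => x _.
  have := hrr x; rewrite ltr_pdivrMr ?(MP 0%N hH x).1 //; lra.
have hH' : (h < H)%N by apply: ltnW.
have [IHb IHs] := IH hH'.
have Dpos : forall phi, phi \in P h -> 0 < \sum_(x in phi) \sum_(a : A) pp x a * mu x a.
  move=> phi phiP.
  have : phi != set0 by apply: contraTneq phiP => ->; case/and3P: (hP h hH') => _ _.
  case/set0Pn => x0 x0p.
  under eq_bigr do rewrite sum_pie.
  rewrite (bigD1 x0) //=.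
  have [m0 /(_ (pie x0)) m1] := MP h hH' x0.
  have : 0 < ms x0 / CA by rewrite divr_gt0.
  have : 0 <= \sum_(i in phi | i != x0) mu i (pie i).
    by apply: sumr_ge0 => i _; apply: (hmu h hH').1.
  lra.
have Tb0 : forall phi phi', phi \in P h -> 0 <= Tb phi phi'.
  move=> phi phi' pP; rewrite /Tbar; apply: divr_ge0; last exact: ltW (Dpos _ pP).
  apply: sumr_ge0 => x _; apply: sumr_ge0 => x' _; apply: sumr_ge0 => a _.
  by rewrite mulr_ge0 ?mulr_ge0 ?(hT h hH x a).1 ?(hmu h hH').1 // /pie_prob ler0n.
split.
  move=> phi' _ /=; split.
    by apply: sumr_ge0 => phi pP; rewrite mulr_ge0 ?Tb0 ?(IHb phi pP).1.
  set K := CX * _.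
  have K0 : 0 <= K.
    apply: mulr_ge0; first exact: ltW. apply: sumr_ge0 => x _; exact: ltW (MP _ hH x).1.
  apply: (@le_trans _ _ (\sum_(phi in P h) db phi * K)); last by rewrite -mulr_suml IHs mul1r.
  apply: ler_sum => phi pP; rewrite ler_wpM2l ?(IHb phi pP).1 //.
  rewrite /Tbar; apply: divle => //; first by apply: ltW; apply: Dpos.
  rewrite mulr_suml; apply: ler_sum => x _.
  apply: (@le_trans _ _ (\sum_(x' in phi') \sum_(a : A) pp x a * mu x a * (CX * ms x'))).
    apply: ler_sum => x' _; apply: ler_sum => a _.
    rewrite ler_wpM2l ?mulr_ge0 ?(hmu h hH').1 // ?/pie_prob ?ler0n //.
    have := hTr h hH x a x'; rewrite ltr_pdivrMr ?(MP _ hH x').1 //; lra.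
  rewrite exchange_big /= mulr_suml; apply: ler_sum => a _.
  by rewrite /K -mulr_sumr -mulr_sumr.
rewrite /= exchange_big /=.
rewrite -[RHS]IHs; apply: eq_bigr => phi pP; rewrite -mulr_sumr.
suff -> : \sum_(phi' in P h.+1) Tb phi phi' = 1 by rewrite mulr1.
rewrite /Tbar -mulr_suml exchange_big /=.
rewrite [X in X / _](_ : _ = \sum_(x in phi) \sum_(a : A) pp x a * mu x a).
  by rewrite divff // gt_eqF // Dpos.
apply: eq_bigr => x _.
rewrite (@sum_cover _ _ (fun x' => \sum_(a : A) pp x a * mu x a * T x a x')) ?hP //.
rewrite exchange_big /=; apply: eq_bigr => a _.
by rewrite -mulr_sumr (hT h hH x a).2 mulr1.
Qed.

Lemma final : valid_setup (@T) rho (@mu) P H -> pushforward_conc (@T) rho (@mu) H CX CA ->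
  forall h, (h < H)%N -> forall I : {set {set X h}}, I \subset P h ->
  \sum_(phi in I) db phi <= CX * CA * \sum_(phi in I) \sum_(x in phi) mu x (pie x).
Proof.
move=> V C h hH I sI; have MP := ms_pos V C.
have [kb _] := key V C h hH.
case: C => CA0 CX0 _ _ _.
rewrite mulr_sumr; apply: ler_sum => phi pI.
have pP : phi \in P h by apply: (subsetP sI).
apply: le_trans (kb _ pP).2 _.
rewrite -mulrA; apply: ler_wpM2l; first exact: ltW.
rewrite mulr_sumr; apply: ler_sum => x _.
have [m0 /(_ (pie x)) m1] := MP h hH x.
by move: m1; rewrite ler_pdivrMr // mulrC.
Qed.


End Proof8.

Theorem mainTheorem8 (R : realFieldType) (X : nat -> finType) (A : finType)
  (H : nat)
  (T : forall h, X h -> A -> X h.+1 -> R) (rho : X 0%N -> R)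
  (mu : forall h, X h -> A -> R) (pie : forall h, X h -> A)
  (P : forall h, {set {set X h}}) (CX CA : R) :
  valid_setup T rho mu P H ->
  pushforward_conc T rho mu H CX CA ->
  forall eps : R, 0 < eps ->
  (exists h, exists I : {set {set X h}},
      (h < H)%N /\ agg_admissible T rho mu pie P eps I) ->
  Cbar T rho mu pie P H eps <= CX * CA.
Proof.
move=> V C eps _ _.
have [CA0 CX0 _ _ _] := C.
have K0 : 0 <= CX * CA by rewrite mulr_ge0 ?ltW.
have V' := V.
case: V' => _ _ hmu _.
rewrite /Cbar; apply: (big_ind (fun v => v <= CX * CA)) => //.
  by move=> x y hx hy; rewrite ge_max hx hy.
move=> [h hH] _ /=.
rewrite /Cbar_layer; apply: (big_ind (fun v => v <= CX * CA)) => //.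
  by move=> x y hx hy; rewrite ge_max hx hy.
move=> I /andP [sI _]; rewrite /agg_ratio.
apply: divle => //.
  by apply: sumr_ge0 => phi _; apply: sumr_ge0 => x _; apply: (hmu h hH).1.
rewrite mulrC; exact: (@final R X A H T rho mu pie P CX CA V C h hH I sI).
Qed.
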